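(* For every fixed integer $k\ge1$, the function $M\mapsto \mathrm{opt}_{\mathrm{bs}}(k,M)$ is superadditive: for all positive integers $M_1,M_2$, \[\mathrm{opt}_{\mathrm{bs}}(k,M_1+M_2)\ge \mathrm{opt}_{\mathrm{bs}}(k,M_1)+\mathrm{opt}_{\mathrm{bs}}(k,M_2).\]
   Context: Let $F$ be a family of functions from a set $X$ to a set $Y$. Online learning of $F$ is a game between a learner and an adversary: the adversary secretly fixes some $f\in F$ and presents inputs $x_1,x_2,\dots\in X$ one at a time, chosen adaptively; after each input $x_t$ the learner guesses a value for $f(x_t)$. A mistake is an incorrect guess. In the standard model, after each guess the adversary reveals the true value $f(x_t)$; in the bandit model, the adversary only says YES (guess correct) or NO (guess incorrect). $\mathrm{opt}_{\mathrm{std}}(F)$ (resp. $\mathrm{opt}_{\mathrm{bs}}(F)$) is the maximum number of mistakes the learner makes in the standard (resp. bandit) model when both learner and adversary play optimally (the learner minimizing, the adversary maximizing, the adversary's answers required to be consistent with some $f\in F$). For positive integers $k,M$, $\mathrm{opt}_{\mathrm{bs}}(k,M)$ denotes the maximum of $\mathrm{opt}_{\mathrm{bs}}(F)$ over all families $F$ of functions (with arbitrary domain) with codomain $\{0,1,\dots,k-1\}$ and $\mathrm{opt}_{\mathrm{std}}(F)=M$. *)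

(* Defs.v *)
(* Online learning (mistake-bound model), standard and bandit
   feedback, for families of functions X -> 'I_k (codomain {0,...,k-1}). *)
From mathcomp Require Import all_boot.
Set Implicit Arguments. Unset Strict Implicit. Unset Printing Implicit Defensive.

Definition family (X : Type) (k : nat) := (X -> 'I_k) -> Prop.

Definition std_learner (X : Type) (k : nat) := seq (X * 'I_k) -> X -> 'I_k.

Definition std_hist X k (f : X -> 'I_k) (xs : nat -> X) (t : nat) : seq (X * 'I_k) :=
  [seq (xs s, f (xs s)) | s <- iota 0 t].

Definition std_mistakes X k (L : std_learner X k) (f : X -> 'I_k) (xs : nat -> X)
  (n : nat) : nat :=
  \sum_(t < n) (L (std_hist f xs t) (xs t) != f (xs t)).

(* L makes at most m mistakes against every target in F and every
   (adaptively chosen; for a deterministic learner, equivalently every)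
   input sequence. *)
Definition std_guarantee X k (F : family X k) (L : std_learner X k) (m : nat) : Prop :=
  forall f, F f -> forall (xs : nat -> X) (n : nat), std_mistakes L f xs n <= m.

Definition opt_std_is X k (F : family X k) (M : nat) : Prop :=
  (exists L, std_guarantee F L M) /\
  (forall L m, std_guarantee F L m -> M <= m).

Definition bs_learner (X : Type) (k : nat) := seq (X * 'I_k * bool) -> X -> 'I_k.

Fixpoint bs_hist X k (L : bs_learner X k) (f : X -> 'I_k) (xs : nat -> X) (t : nat)
  : seq (X * 'I_k * bool) :=
  match t with
  | 0 => [::]
  | t'.+1 =>
      let h := bs_hist L f xs t' in
      let g := L h (xs t') in
      rcons h (xs t', g, g == f (xs t'))
  end.

Definition bs_mistakes X k (L : bs_learner X k) (f : X -> 'I_k) (xs : nat -> X)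
  (n : nat) : nat :=
  \sum_(t < n) (L (bs_hist L f xs t) (xs t) != f (xs t)).

Definition bs_guarantee X k (F : family X k) (L : bs_learner X k) (m : nat) : Prop :=
  forall f, F f -> forall (xs : nat -> X) (n : nat), bs_mistakes L f xs n <= m.

Definition opt_bs_is X k (F : family X k) (M : nat) : Prop :=
  (exists L, bs_guarantee F L M) /\
  (forall L m, bs_guarantee F L m -> M <= m).

Definition opt_bs_kM_is (k M v : nat) : Prop :=
  (exists (X : Type) (F : family X k), opt_std_is F M /\ opt_bs_is F v) /\
  (forall (X : Type) (F : family X k) (v' : nat),
      opt_std_is F M -> opt_bs_is F v' -> v' <= v).

(* Main.v *)
Require Import Defs.
From mathcomp Require Import all_boot.
From Stdlib Require Import Classical.
Set Implicit Arguments. Unset Strict Implicit. Unset Printing Implicit Defensive.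

Fixpoint mist (X R : Type) (k : nat) (fb : X -> 'I_k -> 'I_k -> R)
  (L : seq R -> X -> 'I_k) (f : X -> 'I_k) (h : seq R) (s : seq X) : nat :=
  match s with
  | [::] => 0
  | x :: s' => let g := L h x in (g != f x) + mist fb L f (rcons h (fb x g (f x))) s'
  end.

Fixpoint hfin (X R : Type) (k : nat) (fb : X -> 'I_k -> 'I_k -> R)
  (L : seq R -> X -> 'I_k) (f : X -> 'I_k) (h : seq R) (s : seq X) : seq R :=
  match s with
  | [::] => h
  | x :: s' => let g := L h x in hfin fb L f (rcons h (fb x g (f x))) s'
  end.

Lemma mist_cat X R k (fb : X -> 'I_k -> 'I_k -> R) L f h s t :
  mist fb L f h (s ++ t) = mist fb L f h s + mist fb L f (hfin fb L f h s) t.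
Proof. elim: s h => [|x s IH] h //=. by rewrite IH addnA. Qed.

Lemma mist_emb (X X' R R' : Type) k (fb : X -> 'I_k -> 'I_k -> R)
  (fb' : X' -> 'I_k -> 'I_k -> R') (j : X' -> X) (e : R' -> R)
  (he : forall x g y, e (fb' x g y) = fb (j x) g y) L f H h s :
  mist fb L f (H ++ map e h) (map j s) =
    mist fb' (fun h' x => L (H ++ map e h') (j x)) (fun x => f (j x)) h s /\
  hfin fb L f (H ++ map e h) (map j s) =
    H ++ map e (hfin fb' (fun h' x => L (H ++ map e h') (j x)) (fun x => f (j x)) h s).
Proof.
elim: s h => [|x s IH] h //=.
have E : rcons (H ++ map e h) (fb (j x) (L (H ++ map e h) (j x)) (f (j x))) =
  H ++ map e (rcons h (fb' x (L (H ++ map e h) (j x)) (f (j x)))).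
  by rewrite map_rcons rcons_cat he.
rewrite E; case: (IH (rcons h (fb' x (L (H ++ map e h) (j x)) (f (j x))))) => -> ->; by split.
Qed.

Definition lft X1 X2 (z : X1 + X2) := if z is inl x then Some x else None.
Definition rgt X1 X2 (z : X1 + X2) := if z is inr x then Some x else None.

Definition Lsum X1 X2 R R1 R2 k (p1 : R -> option R1) (p2 : R -> option R2)
  (L1 : seq R1 -> X1 -> 'I_k) (L2 : seq R2 -> X2 -> 'I_k) : seq R -> X1 + X2 -> 'I_k :=
  fun h z => match z with inl x => L1 (pmap p1 h) x | inr x => L2 (pmap p2 h) x end.

Lemma pmap_rcons' A B (p : A -> option B) s x : pmap p (rcons s x) = pmap p s ++ pmap p [:: x].
Proof. by rewrite -cats1 pmap_cat. Qed.

Lemma mist_split X1 X2 R R1 R2 k (fb : X1 + X2 -> 'I_k -> 'I_k -> R)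
  (fb1 : X1 -> 'I_k -> 'I_k -> R1) (fb2 : X2 -> 'I_k -> 'I_k -> R2)
  (p1 : R -> option R1) (p2 : R -> option R2)
  (h1 : forall x g y, p1 (fb (inl x) g y) = Some (fb1 x g y))
  (h1' : forall x g y, p1 (fb (inr x) g y) = None)
  (h2 : forall x g y, p2 (fb (inr x) g y) = Some (fb2 x g y))
  (h2' : forall x g y, p2 (fb (inl x) g y) = None) L1 L2 f h s :
  mist fb (Lsum p1 p2 L1 L2) f h s =
  mist fb1 L1 (fun x => f (inl x)) (pmap p1 h) (pmap (@lft X1 X2) s) +
  mist fb2 L2 (fun x => f (inr x)) (pmap p2 h) (pmap (@rgt X1 X2) s).
Proof.
elim: s h => [|[x|x] s IH] h //=; rewrite IH !pmap_rcons' /= ?h1 ?h1' ?h2 ?h2' /= ?cats0 ?cats1.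
  by rewrite addnA.
by rewrite addnCA.
Qed.

Definition Guar X R k (fb : X -> 'I_k -> 'I_k -> R) (F : Defs.family X k)
  (L : seq R -> X -> 'I_k) m := forall f, F f -> forall s, mist fb L f [::] s <= m.
Definition OptG X R k (fb : X -> 'I_k -> 'I_k -> R) (F : Defs.family X k) M :=
  (exists L, Guar fb F L M) /\ (forall L m, Guar fb F L m -> M <= m).

Lemma LB X R k (fb : X -> 'I_k -> 'I_k -> R) F M :
  OptG fb F M -> (exists f, F f) ->
  forall L, exists f, F f /\ exists s, M <= mist fb L f [::] s.
Proof.
move=> [_ Hlow] [f0 Hf0] L.
case: M Hlow => [|M] Hlow; first by exists f0; split=> //; exists [::].
apply: NNPP => Hn.
have G : Guar fb F L M.
  move=> f Hf s; rewrite leqNgt; apply/negP => Hlt; apply: Hn.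
  by exists f; split=> //; exists s.
by move: (Hlow _ _ G); rewrite ltnn.
Qed.

Lemma nonempty X R k (fb : X -> 'I_k -> 'I_k -> R) F M :
  OptG fb F M -> 1 <= M -> exists f, F f.
Proof.
move=> [[L _] Hlow] HM; apply: NNPP => Hn.
have G : Guar fb F L 0 by move=> f Hf; exfalso; apply: Hn; exists f.
by move: (Hlow _ _ G); rewrite leqn0 => /eqP E; rewrite E in HM.
Qed.

Definition Fp X1 X2 k (F1 : Defs.family X1 k) (F2 : Defs.family X2 k) : Defs.family (X1 + X2) k :=
  fun f => F1 (fun x => f (inl x)) /\ F2 (fun x => f (inr x)).

Lemma prod_opt X1 X2 R R1 R2 k (fb : X1 + X2 -> 'I_k -> 'I_k -> R)
  (fb1 : X1 -> 'I_k -> 'I_k -> R1) (fb2 : X2 -> 'I_k -> 'I_k -> R2)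
  (p1 : R -> option R1) (p2 : R -> option R2) (e1 : R1 -> R) (e2 : R2 -> R)
  (h1 : forall x g y, p1 (fb (inl x) g y) = Some (fb1 x g y))
  (h1' : forall x g y, p1 (fb (inr x) g y) = None)
  (h2 : forall x g y, p2 (fb (inr x) g y) = Some (fb2 x g y))
  (h2' : forall x g y, p2 (fb (inl x) g y) = None)
  (he1 : forall x g y, e1 (fb1 x g y) = fb (inl x) g y)
  (he2 : forall x g y, e2 (fb2 x g y) = fb (inr x) g y)
  F1 F2 M1 M2 :
  OptG fb1 F1 M1 -> OptG fb2 F2 M2 -> (exists f, F1 f) -> (exists f, F2 f) ->
  OptG fb (Fp F1 F2) (M1 + M2).
Proof.
move=> O1 O2 N1 N2; split.
  case: O1 => [[L1 G1] _]; case: O2 => [[L2 G2] _].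
  exists (Lsum p1 p2 L1 L2) => f [Hf1 Hf2] s.
  rewrite (mist_split h1 h1' h2 h2') /=.
  by apply: leq_add; [apply: G1 | apply: G2].
move=> L m G.
pose L1' := fun h x => L ([::] ++ map e1 h) (inl x).
have [f1 [Hf1 [s1 H1]]] := LB O1 N1 L1'.
pose H := [::] ++ map e1 (hfin fb1 L1' f1 [::] s1).
pose L2' := fun h x => L (H ++ map e2 h) (inr x).
have [f2 [Hf2 [s2 H2]]] := LB O2 N2 L2'.
pose f := fun z => match z with inl a => f1 a | inr b => f2 b end.
have := G f (conj Hf1 Hf2) (map inl s1 ++ map inr s2).
rewrite mist_cat.
have [E1 E1'] := mist_emb (j := inl) he1 L f [::] [::] s1.
have [E2 _] := mist_emb (j := inr) he2 L f H [::] s2.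
have E1a : mist fb L f [::] (map inl s1) = mist fb1 L1' f1 [::] s1 := E1.
have E1b : hfin fb L f [::] (map inl s1) = H := E1'.
have E2a : mist fb L f H (map inr s2) = mist fb2 L2' f2 [::] s2.
  by rewrite -E2 cats0.
rewrite E1a E1b E2a => Hm.
exact: leq_trans (leq_add H1 H2) Hm.
Qed.

Definition stdfb X k (x : X) (g y : 'I_k) : X * 'I_k := (x, y).
Definition bsfb X k (x : X) (g y : 'I_k) : X * 'I_k * bool := (x, g, g == y).

Lemma std_mist X k (L : std_learner X k) f xs n :
  std_mistakes L f xs n = mist (@stdfb X k) L f [::] (map xs (iota 0 n)).
Proof.
rewrite /std_mistakes -(big_mkord xpredT (fun t => (L (std_hist f xs t) (xs t) != f (xs t)) : nat)).
suff S : forall t, \sum_(t <= i < t + n) (L (std_hist f xs i) (xs i) != f (xs i)) =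
  mist (@stdfb X k) L f (std_hist f xs t) (map xs (iota t n)) by apply: (S 0).
elim: n => [|n IH] t; first by rewrite addn0 big_geq.
rewrite big_ltn; last by rewrite addnS ltnS leq_addr.
rewrite -addSnnS IH /=.
congr (_ + mist _ _ _ _ _).
by rewrite /std_hist -addn1 iotaD map_cat cats1.
Qed.

Lemma bs_mist X k (L : bs_learner X k) f xs n :
  bs_mistakes L f xs n = mist (@bsfb X k) L f [::] (map xs (iota 0 n)).
Proof.
rewrite /bs_mistakes -(big_mkord xpredT (fun t => (L (bs_hist L f xs t) (xs t) != f (xs t)) : nat)).
suff S : forall t, \sum_(t <= i < t + n) (L (bs_hist L f xs i) (xs i) != f (xs i)) =
  mist (@bsfb X k) L f (bs_hist L f xs t) (map xs (iota t n)) by apply: (S 0).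
elim: n => [|n IH] t; first by rewrite addn0 big_geq.
rewrite big_ltn; last by rewrite addnS ltnS leq_addr.
by rewrite -addSnnS IH /=.
Qed.

Lemma std_equiv X k (F : Defs.family X k) M : opt_std_is F M <-> OptG (@stdfb X k) F M.
Proof.
have E : forall L m, std_guarantee F L m <-> Guar (@stdfb X k) F L m.
  move=> L m; split.
    move=> G f Hf [|x0 s] //.
    have := G f Hf (nth x0 (x0 :: s)) (size (x0 :: s)).
    by rewrite std_mist -/(mkseq _ _) mkseq_nth.
  by move=> G f Hf xs n; rewrite std_mist; apply: G.
split; case=> [[L G] H]; split.
- by exists L; apply/E.
- by move=> L' m /E; apply: H.
- by exists L; apply/E.
- by move=> L' m /E; apply: H.
Qed.

Lemma bs_equiv X k (F : Defs.family X k) M : opt_bs_is F M <-> OptG (@bsfb X k) F M.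
Proof.
have E : forall L m, bs_guarantee F L m <-> Guar (@bsfb X k) F L m.
  move=> L m; split.
    move=> G f Hf [|x0 s] //.
    have := G f Hf (nth x0 (x0 :: s)) (size (x0 :: s)).
    by rewrite bs_mist -/(mkseq _ _) mkseq_nth.
  by move=> G f Hf xs n; rewrite bs_mist; apply: G.
split; case=> [[L G] H]; split.
- by exists L; apply/E.
- by move=> L' m /E; apply: H.
- by exists L; apply/E.
- by move=> L' m /E; apply: H.
Qed.

Theorem mainTheorem4 (k M1 M2 v1 v2 v : nat) :
  1 <= k -> 1 <= M1 -> 1 <= M2 ->
  opt_bs_kM_is k M1 v1 -> opt_bs_kM_is k M2 v2 -> opt_bs_kM_is k (M1 + M2) v ->
  v1 + v2 <= v.
Proof.
move=> _ HM1 HM2 [[X1 [F1 [S1 B1]]] _] [[X2 [F2 [S2 B2]]] _] [_ Hmax].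
move/std_equiv: S1 => S1; move/std_equiv: S2 => S2.
move/bs_equiv: B1 => B1; move/bs_equiv: B2 => B2.
have N1 := nonempty S1 HM1; have N2 := nonempty S2 HM2.
apply: (Hmax _ (Fp F1 F2)).
  apply/std_equiv.
  apply: (@prod_opt X1 X2 _ _ _ k (@stdfb _ k) (@stdfb _ k) (@stdfb _ k)
    (fun r => if r.1 is inl x then Some (x, r.2) else None)
    (fun r => if r.1 is inr x then Some (x, r.2) else None)
    (fun r => (inl r.1, r.2)) (fun r => (inr r.1, r.2))) => //.
apply/bs_equiv.
apply: (@prod_opt X1 X2 _ _ _ k (@bsfb _ k) (@bsfb _ k) (@bsfb _ k)
  (fun r => if r.1.1 is inl x then Some (x, r.1.2, r.2) else None)
  (fun r => if r.1.1 is inr x then Some (x, r.1.2, r.2) else None)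
  (fun r => (inl r.1.1, r.1.2, r.2)) (fun r => (inr r.1.1, r.1.2, r.2))) => //.
Qed.
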